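(* Let the polynomials $L_h(z)$, $h\ge 0$, be defined by $L_0(z)=z$, $L_1(z)=z^2$ and $L_{h+2}(z)=L_{h+1}(z)\bigl(L_{h+1}(z)+L_h(z)\bigr)$ for all $h\ge 0$. For each $h$, let $\gamma_h$ be the unique positive real solution of $L_h(z)=1/2$. Let $\ell_n$ be the coefficient of $z^n$ in $L(z)=\sum_{h\ge0}L_h(z)$. Then the limit $\gamma=\lim_{h\to\infty}\gamma_h=0.67418\ldots$ exists, and \[\log_2(\ell_n)=n\log_2(\gamma^{-1})+\log\theta(n),\qquad n\log_2(\gamma^{-1})=n(0.568\ldots),\] for a function $\theta$ growing at most sub-exponentially, i.e. $\theta(n)=o(\kappa^n)$ for every $\kappa>1$.
   Context: $L_h(z)$ is the generating function of Left-Leaning AVL trees of height $h$ (AVL trees in which at every node the left subtree's height is at least the right subtree's height), and $\ell_n$ is the corresponding counting sequence of Left-Leaning AVL trees. *)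

(* Defs.v *)
From HB Require Import structures.
From mathcomp Require Import all_boot all_order all_algebra.
From mathcomp Require Import all_classical all_reals all_analysis.
Set Implicit Arguments. Unset Strict Implicit. Unset Printing Implicit Defensive.
Import Order.TTheory GRing.Theory Num.Theory.
Local Open Scope ring_scope.

(* Lpair h = (L_h, L_{h+1}) *)
Fixpoint Lpair (h : nat) : {poly int} * {poly int} :=
  match h with
  | 0%N => ('X, 'X ^+ 2)
  | h'.+1 => let: (a, b) := Lpair h' in (b, b * (b + a))
  end.

Definition L (h : nat) : {poly int} := (Lpair h).1.

Lemma L0 : L 0 = 'X. Proof. by []. Qed.
Lemma L1 : L 1 = 'X ^+ 2. Proof. by []. Qed.
Lemma LSS h : L h.+2 = L h.+1 * (L h.+1 + L h).
Proof. rewrite /L /=. by case: (Lpair h). Qed.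

Definition Lr (R : realType) (h : nat) : {poly R} := map_poly intr (L h).

(* ell n = coefficient of z^n in L(z) = sum_{h>=0} L_h(z).
   Since z^{h+1} divides L_h, only h <= n contribute. *)
Definition ell (n : nat) : int := \sum_(h < n.+1) (L h)`_n.

Definition log2 (R : realType) (x : R) : R := ln x / ln 2.

(* Main.v *)
From Stdlib Require Import ZArith Lia.
Require Import Defs.
From HB Require Import structures.
From mathcomp Require Import all_boot all_order all_algebra.
From mathcomp Require Import all_classical all_reals all_analysis.
From mathcomp Require Import ring lra zify.
Import Order.TTheory GRing.Theory Num.Theory numFieldNormedType.Exports.
Local Open Scope classical_set_scope.
Local Open Scope ring_scope.

Definition av (R : realType) (h : nat) (z : R) : R := (Lr R h).[z].
Arguments av {R}.

Lemma av0 {R : realType} (z : R) : av 0 z = z.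
Proof. by rewrite /av /Lr L0 map_polyX hornerX. Qed.

Lemma av1 {R : realType} (z : R) : av 1 z = z * z.
Proof. by rewrite /av /Lr L1 rmorphXn /= map_polyX hornerXn expr2. Qed.

Lemma avSS {R : realType} h (z : R) :
  av h.+2 z = av h.+1 z * (av h.+1 z + av h z).
Proof. by rewrite /av /Lr LSS rmorphM rmorphD /= hornerM hornerD. Qed.

Lemma av_ge0 {R : realType} h (z : R) : 0 <= z -> 0 <= av h z /\ 0 <= av h.+1 z.
Proof.
move=> z0; elim: h => [|h [IH1 IH2]]; first by rewrite av0 av1; split => //; exact: mulr_ge0.
split => //; rewrite avSS; apply: mulr_ge0 => //; exact: addr_ge0.
Qed.

Lemma av_nn {R : realType} h (z : R) : 0 <= z -> 0 <= av h z.
Proof. by move=> z0; case: (av_ge0 h _ z0). Qed.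

Lemma av_mono {R : realType} h (x y : R) : 0 <= x -> x <= y ->
  av h x <= av h y /\ av h.+1 x <= av h.+1 y.
Proof.
move=> x0 xy; have y0 : 0 <= y by apply: le_trans xy.
elim: h => [|h [IH1 IH2]].
  rewrite !av0 !av1; split => //; apply: ler_pM => //.
split => //; rewrite !avSS; apply: ler_pM => //; first exact: av_nn.
  by apply: addr_ge0; exact: av_nn.
exact: lerD.
Qed.

Lemma av_le {R : realType} h (x y : R) : 0 <= x -> x <= y -> av h x <= av h y.
Proof. by move=> x0 xy; case: (av_mono h _ _ x0 xy). Qed.

Lemma subr_ge0_helper {R : realType} {r : R} : 1 <= r -> 0 <= r - 1.
Proof. by rewrite subr_ge0. Qed.

Lemma subr_ge0_helper2 {R : realType} {r s : R} : r <= s -> 0 <= s - r.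
Proof. by rewrite subr_ge0. Qed.

Lemma av_ratio {R : realType} h (x y : R) : 0 < x -> x <= y ->
  (y / x) ^+ h.+1 * av h x <= av h y /\
  (y / x) ^+ h.+2 * av h.+1 x <= av h.+1 y.
Proof.
move=> x0 xy; have y0 : 0 < y by apply: lt_le_trans xy.
set r := y / x.
have rho1 : 1 <= r by rewrite ler_pdivlMr // mul1r.
have ey : y = r * x by rewrite /r mulfVK // gt_eqF.
elim: h => [|h [IH1 IH2]].
  rewrite !av0 !av1 expr1 -ey; split => //.
  by rewrite ey expr2 le_eqVlt; apply/orP; left; apply/eqP; ring.
split => //; rewrite !avSS.
have B0 := av_nn h _ (ltW x0); have A0 := av_nn h.+1 _ (ltW x0).
set A := av h.+1 x in A0 IH2 *; set B := av h x in B0 IH1 *.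
set A' := av h.+1 y in IH2 *; set B' := av h y in IH1 *.
have r1 : 1 <= r ^+ h.+1 by exact: exprn_ege1.
have e2 : r ^+ h.+2 = r ^+ h.+1 * r by rewrite exprSr.
have e3 : r ^+ h.+3 = r ^+ h.+1 * r * r by rewrite !exprSr.
rewrite e2 in IH2; rewrite e3.
set s := r ^+ h.+1 in r1 IH1 IH2 *.
have s0 : 0 <= s by apply: le_trans r1.
have r0 : 0 <= r by apply: le_trans rho1.
have h1 : s * r * A <= A' by [].
have h2 : s * A <= s * r * A.
  have := mulr_ge0 (mulr_ge0 s0 A0) (subr_ge0_helper rho1); nra.
have h3 : s * (A + B) <= A' + B' by rewrite mulrDr; apply: lerD => //; apply: le_trans h1.
have : s * r * A * (s * (A + B)) <= A' * (A' + B').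
  apply: ler_pM => //; first by do 2 apply: mulr_ge0 => //.
  by apply: mulr_ge0 => //; apply: addr_ge0.
apply: le_trans.
have -> : s * r * A * (s * (A + B)) = s * (s * r * (A * (A + B))) by ring.
have rs : r <= s by rewrite /s; apply: ler_eXnr.
have P0 : 0 <= s * r * (A * (A + B)).
  apply: mulr_ge0; first exact: mulr_ge0.
  by apply: mulr_ge0 => //; apply: addr_ge0.
have t1 := subr_ge0_helper2 rs.
have t2 := mulr_ge0 t1 P0.
nra.
Qed.


Arguments av_le {R} h {x y}.
Arguments av_nn {R} h {z}.
Arguments av_mono {R} h {x y}.
Arguments av_ratio {R} h {x y}.

Definition Sm {R : realType} (z : R) :=
  exists h, av h z <= 2^-1 /\ av h.+1 z < 2^-1.
Definition Bg {R : realType} (z : R) :=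
  exists h, 2^-1 <= av h z /\ 2^-1 < av h.+1 z.

Lemma Sm_geo {R : realType} {z : R} {h} : 0 <= z ->
  av h z <= 2^-1 -> av h.+1 z < 2^-1 ->
  forall k, av (h + k) z <= 2^-1 /\
    av (h + k).+1 z <= av h.+1 z * (av h.+1 z + 2^-1) ^+ k.
Proof.
move=> z0 H0 H1; set c := av h.+1 z; set q := c + 2^-1.
have c0 : 0 <= c by exact: av_nn.
have q0 : 0 <= q by rewrite /q; apply: addr_ge0 => //.
have qE : q = c + 2^-1 by [].
have cE : av h.+1 z = c by [].
clearbody q c.
have q1 : q <= 1 by lra.
elim=> [|k [IH1 IH2]]; first by rewrite addn0 expr0 mulr1 cE; split => //; apply: ltW.
have qk : q ^+ k <= 1 by apply: exprn_ile1.
have cq : c * q ^+ k <= c by rewrite -[X in _ <= X]mulr1; apply: ler_wpM2l.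
rewrite addnS; split; first by apply: (le_trans IH2); apply: (le_trans cq); lra.
rewrite avSS exprS.
have -> : c * (q * q ^+ k) = (c * q ^+ k) * q by ring.
have A0 := av_nn (h + k).+1 z0; have B0 := av_nn (h + k) z0.
apply: ler_pM => //; first by apply: addr_ge0.
by rewrite qE; apply: lerD => //; apply: le_trans cq.
Qed.

Lemma Sm_event {R : realType} {z : R} : 0 <= z -> Sm z ->
  exists K, forall k, (K <= k)%N -> av k z < 2^-1.
Proof.
move=> z0 [h [H0 H1]]; have G := Sm_geo z0 H0 H1.
exists h.+1 => k Hk.
have -> : k = (h + (k - h.+1)).+1%N by lia.
case: (G (k - h.+1)%N) => _ G2; apply: (le_lt_trans G2).
set c := av h.+1 z in H1 *.
have c0 : 0 <= c by exact: av_nn.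
have q0 : 0 <= c + 2^-1 by apply: addr_ge0.
have q1 : c + 2^-1 <= 1 by move: H1; clearbody c; lra.
have qk : (c + 2^-1) ^+ (k - h.+1)%N <= 1 by apply: exprn_ile1.
apply: (le_lt_trans _ H1); rewrite -[X in _ <= X]mulr1; apply: ler_wpM2l => //.
Qed.

Lemma Bg_event {R : realType} {z : R} : 0 <= z -> Bg z ->
  exists K, forall k, (K <= k)%N -> 2^-1 < av k z.
Proof.
move=> z0 [h [H0 H1]].
have G : forall k, 2^-1 <= av (h + k) z /\ 2^-1 < av (h + k).+1 z.
  elim=> [|k [IH1 IH2]]; first by rewrite addn0.
  rewrite addnS; split; first exact: ltW.
  rewrite avSS.
  move: IH1 IH2; move: (av (h + k).+1 z) (av (h + k) z) => A B IH1 IH2.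
  nra.
exists h.+1 => k Hk.
have -> : k = (h + (k - h.+1)).+1%N by lia.
by case: (G (k - h.+1)%N).
Qed.

Lemma Sm_down {R : realType} {w z : R} : 0 <= w -> w <= z -> Sm z -> Sm w.
Proof.
move=> w0 wz [h [H0 H1]]; exists h; split.
  exact: le_trans (av_le h w0 wz) H0.
exact: le_lt_trans (av_le h.+1 w0 wz) H1.
Qed.

Lemma Sm_Bg {R : realType} {x y : R} : 0 <= x -> x <= y -> Bg x -> Sm y -> False.
Proof.
move=> x0 xy Bx Sy; have y0 : 0 <= y by apply: le_trans xy.
case: (Bg_event x0 Bx) => K1 HK1; case: (Sm_event y0 Sy) => K2 HK2.
have := HK1 (maxn K1 K2) (leq_maxl _ _); have := HK2 (maxn K1 K2) (leq_maxr _ _).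
have := av_le (maxn K1 K2) x0 xy; lra.
Qed.

Lemma nesc_bounds {R : realType} {z : R} : 0 <= z -> ~ Sm z -> ~ Bg z ->
  forall h, av h.+1 z <= 1 /\ 3^-1 <= av h.+2 z.
Proof.
move=> z0 nS nB.
have U : forall h, av h.+1 z <= 1.
  move=> h; case: (lerP (av h.+1 z) (2^-1)) => [H|H]; first lra.
  have H2 : av h.+2 z <= 2^-1.
    case: (lerP (av h.+2 z) (2^-1)) => // H2; exfalso; apply: nB.
    by exists h.+1; split => //; apply: ltW.
  move: H2; rewrite avSS; have := av_nn h z0.
  move: H (av h.+1 z) (av h z) => _ A B; nra.
move=> h; split; first exact: U.
case: (lerP (2^-1) (av h.+2 z)) => [H|H]; first lra.
have H3 : 2^-1 <= av h.+3 z.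
  case: (lerP (2^-1) (av h.+3 z)) => // H3; exfalso; apply: nS.
  by exists h.+2; split => //; apply: ltW.
move: H3; rewrite (avSS h.+1); have := U h; have := av_nn h.+2 z0; have := av_nn h.+1 z0.
move: H (av h.+2 z) (av h.+1 z) => _ C A; nra.
Qed.

Lemma bern {R : realType} (r : R) n : 1 <= r -> 1 + n%:R * (r - 1) <= r ^+ n.
Proof.
move=> r1; elim: n => [|n IH]; first by rewrite mul0r addr0 expr0.
rewrite exprS -natr1.
have m0 : 0 <= n%:R :> R by [].
have f1 := mulr_ge0 m0 (mulr_ge0 (subr_ge0_helper r1) (subr_ge0_helper r1)).
have r0 : 0 <= r by apply: le_trans r1.
have f2 := mulr_ge0 r0 (subr_ge0_helper2 IH).
nra.
Qed.

Lemma dich {R : realType} {x y : R} : 0 < x -> x < y ->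
  ~ Sm x -> ~ Bg x -> ~ Sm y -> ~ Bg y -> False.
Proof.
move=> x0 xy nSx nBx nSy nBy.
have y0 : 0 <= y by apply: ltW; apply: lt_trans xy.
have Bx := nesc_bounds (ltW x0) nSx nBx.
have By := nesc_bounds y0 nSy nBy.
set r := y / x.
have r1 : 1 < r by rewrite /r ltr_pdivlMr // mul1r.
have K : forall h, r ^+ h.+3 <= 3.
  move=> h; case: (av_ratio h.+2 x0 (ltW xy)) => H _.
  case: (Bx h) => _ L; case: (By h.+1) => U _.
  have := le_trans H U; move: L; rewrite -/r.
  have := exprn_ge0 h.+3 (ltW (lt_trans ltr01 r1)).
  move: (r ^+ h.+3) (av h.+2 x) => p a; nra.
have rr : 0 <= 3 / (r - 1) by apply: divr_ge0 => //; lra.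
have := archi_boundP rr; set N := Num.Def.archi_bound _ => HN.
have := bern r N.+3 (ltW r1); have := K N; clearbody r N.
have e : (N.+3)%:R = N%:R + 3 :> R by rewrite -natrD addn3.
rewrite e; move: HN; rewrite ltr_pdivrMr; last lra.
move: (N%:R : R) (r ^+ N.+3) => n p; nra.
Qed.



Definition Zr_def {R : realType} (z : Z) : R := (Z.to_nat z)%:R.
Fact Zr_key : unit. Proof. exact: tt. Qed.
Definition Zr {R : realType} : Z -> R := locked_with Zr_key (@Zr_def R).
Lemma ZrE {R : realType} (z : Z) : Zr z = (Z.to_nat z)%:R :> R.
Proof. by rewrite /Zr unlock. Qed.

Lemma Zr_add {R : realType} (a b : Z) : Z.leb 0 a = true -> Z.leb 0 b = true ->
  Zr (Z.add a b) = Zr a + Zr b :> R.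
Proof.
move=> /Z.leb_le a0 /Z.leb_le b0; rewrite !ZrE -natrD; congr (_%:R).
by rewrite Z2Nat.inj_add.
Qed.

Lemma Zr_mul {R : realType} (a b : Z) : Z.leb 0 a = true -> Z.leb 0 b = true ->
  Zr (Z.mul a b) = Zr a * Zr b :> R.
Proof.
move=> /Z.leb_le a0 /Z.leb_le b0; rewrite !ZrE -natrM; congr (_%:R).
by rewrite Z2Nat.inj_mul.
Qed.

Lemma Zr_pow {R : realType} (a : Z) n : Z.leb 0 a = true ->
  Zr (Z.pow a (Z.of_nat n)) = Zr a ^+ n :> R.
Proof.
move=> /Z.leb_le a0; rewrite !ZrE -natrX; congr (_%:R).
rewrite Z2Nat.inj_pow; [|lia|lia]. rewrite Nat2Z.id; elim: n => [//|n IH]; by rewrite expnS -IH Nat.pow_succ_r'.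
Qed.

Lemma Zr_le {R : realType} (a b : Z) : Z.leb a b = true -> Zr a <= Zr b :> R.
Proof.
move=> /Z.leb_le ab; rewrite !ZrE ler_nat; lia.
Qed.

Lemma Zr_lt {R : realType} (a b : Z) : Z.leb 0 a = true -> Z.ltb a b = true -> Zr a < Zr b :> R.
Proof.
move=> /Z.leb_le a0 /Z.ltb_lt ab; rewrite !ZrE ltr_nat; lia.
Qed.

Definition Dz : Z := 1000000000000.

Lemma Dpos {R : realType} : 0 < Zr Dz :> R.
Proof. by have := @Zr_lt R 0 Dz erefl erefl; rewrite [Zr 0]ZrE. Qed.

Lemma Zr_ge0 {R : realType} (z : Z) : 0 <= Zr z :> R.
Proof. by rewrite ZrE. Qed.

Lemma up_mul {R : realType} (u v : R) (x y w : Z) : 0 <= u -> 0 <= v ->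
  u * Zr Dz <= Zr x -> v * Zr Dz <= Zr y ->
  Z.leb 0 x = true -> Z.leb 0 y = true -> Z.leb 0 w = true ->
  Z.leb (Z.mul x y) (Z.mul w Dz) = true -> (u * v) * Zr Dz <= Zr w.
Proof.
move=> u0 v0 hu hv x0 y0 w0 hw.
have D0 := @Dpos R.
rewrite -(ler_pM2r D0).
have -> : u * v * Zr Dz * Zr Dz = (u * Zr Dz) * (v * Zr Dz) by ring.
rewrite -(Zr_mul w Dz w0 erefl); apply: (@le_trans _ _ (Zr (Z.mul x y))); last exact: Zr_le hw.
rewrite Zr_mul //.
apply: ler_pM => //; apply: mulr_ge0 => //; exact: ltW.
Qed.

Lemma lo_mul {R : realType} (u v : R) (x y w : Z) :
  Zr x <= u * Zr Dz -> Zr y <= v * Zr Dz ->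
  Z.leb 0 x = true -> Z.leb 0 y = true -> Z.leb 0 w = true ->
  Z.leb (Z.mul w Dz) (Z.mul x y) = true -> Zr w <= (u * v) * Zr Dz.
Proof.
move=> hu hv x0 y0 w0 hw.
have D0 := @Dpos R.
rewrite -(ler_pM2r D0).
have -> : u * v * Zr Dz * Zr Dz = (u * Zr Dz) * (v * Zr Dz) by ring.
rewrite -(Zr_mul w Dz w0 erefl); apply: (@le_trans _ _ (Zr (Z.mul x y))); first exact: Zr_le hw.
rewrite Zr_mul //.
apply: ler_pM => //; exact: Zr_ge0.
Qed.

Lemma up_step {R : realType} h (z : R) (x y w : Z) : 0 <= z ->
  av h z * Zr Dz <= Zr x -> av h.+1 z * Zr Dz <= Zr y ->
  Z.leb 0 x = true -> Z.leb 0 y = true -> Z.leb 0 w = true ->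
  Z.leb (Z.mul y (Z.add y x)) (Z.mul w Dz) = true -> av h.+2 z * Zr Dz <= Zr w.
Proof.
move=> z0 hx hy x0 y0 w0 hw; rewrite avSS.
apply: up_mul hw => //; first exact: av_nn.
- by apply: addr_ge0; exact: av_nn.
- by rewrite mulrDl Zr_add //; apply: lerD.
- by move: x0 y0 => /Z.leb_le ? /Z.leb_le ?; apply/Z.leb_le; lia.
Qed.

Lemma lo_step {R : realType} h (z : R) (x y w : Z) :
  Zr x <= av h z * Zr Dz -> Zr y <= av h.+1 z * Zr Dz ->
  Z.leb 0 x = true -> Z.leb 0 y = true -> Z.leb 0 w = true ->
  Z.leb (Z.mul w Dz) (Z.mul y (Z.add y x)) = true -> Zr w <= av h.+2 z * Zr Dz.
Proof.
move=> hx hy x0 y0 w0 hw; rewrite avSS.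
apply: lo_mul hw => //.
- by rewrite mulrDl Zr_add //; apply: lerD.
- by move: x0 y0 => /Z.leb_le ? /Z.leb_le ?; apply/Z.leb_le; lia.
Qed.

Lemma Zr2 {R : realType} : Zr 2 = 2 :> R.
Proof. by rewrite ZrE. Qed.

Lemma leb0_2x {x : Z} : Z.leb 0 x = true -> Z.leb 0 (Z.mul 2 x) = true.
Proof. by move=> /Z.leb_le ?; apply/Z.leb_le; lia. Qed.

Lemma fin_up_le {R : realType} (u : R) (x : Z) : u * Zr Dz <= Zr x ->
  Z.leb 0 x = true -> Z.leb (Z.mul 2 x) Dz = true -> u <= 2^-1.
Proof.
move=> hu x0 hx; have := Zr_le (R:=R) _ _ hx; rewrite Zr_mul // Zr2.
have D0 := @Dpos R; move: hu D0; move: (Zr x) (Zr Dz) => X D; nra.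
Qed.

Lemma fin_up_lt {R : realType} (u : R) (x : Z) : u * Zr Dz <= Zr x ->
  Z.leb 0 x = true -> Z.ltb (Z.mul 2 x) Dz = true -> u < 2^-1.
Proof.
move=> hu x0 hx; have := Zr_lt (R:=R) (Z.mul 2 x) Dz (leb0_2x x0) hx.
rewrite Zr_mul // Zr2.
have D0 := @Dpos R; move: hu D0; move: (Zr x) (Zr Dz) => X D; nra.
Qed.

Lemma fin_lo_le {R : realType} (u : R) (x : Z) : Zr x <= u * Zr Dz ->
  Z.leb 0 x = true -> Z.leb Dz (Z.mul 2 x) = true -> 2^-1 <= u.
Proof.
move=> hu x0 hx; have := Zr_le (R:=R) _ _ hx; rewrite Zr_mul // Zr2.
have D0 := @Dpos R; move: hu D0; move: (Zr x) (Zr Dz) => X D; nra.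
Qed.

Lemma fin_lo_lt {R : realType} (u : R) (x : Z) : Zr x <= u * Zr Dz ->
  Z.leb 0 x = true -> Z.ltb Dz (Z.mul 2 x) = true -> 2^-1 < u.
Proof.
move=> hu x0 hx; have := Zr_lt (R:=R) Dz (Z.mul 2 x) erefl hx.
rewrite Zr_mul // Zr2.
have D0 := @Dpos R; move: hu D0; move: (Zr x) (Zr Dz) => X D; nra.
Qed.

Lemma Zr_pos {R : realType} (a : Z) : Z.ltb 0 a = true -> 0 < Zr a :> R.
Proof. by move=> h; have := @Zr_lt R 0 a erefl h; rewrite [Zr 0]ZrE. Qed.

Definition z1 {R : realType} : R := 67418%:R / 100000%:R.
Definition z2 {R : realType} : R := Zr 674185 / Zr 1000000.

Lemma z1E {R : realType} : z1 * Zr Dz = Zr 674180000000 :> R.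
Proof.
have -> : Dz = Z.mul 100000 10000000 by [].
have -> : (674180000000 : Z) = Z.mul 67418 10000000 by [].
rewrite !Zr_mul // /z1.
have -> : Zr 67418 = 67418%:R :> R by rewrite ZrE.
have -> : Zr 100000 = 100000%:R :> R by rewrite ZrE.
have h : 100000%:R != 0 :> R by rewrite pnatr_eq0.
by field.
Qed.

Lemma z2E {R : realType} : z2 * Zr Dz = Zr 674185000000 :> R.
Proof.
have -> : Dz = Z.mul 1000000 1000000 by [].
have -> : (674185000000 : Z) = Z.mul 674185 1000000 by [].
rewrite !Zr_mul // /z2.
have h : Zr 1000000 != 0 :> R by rewrite gt_eqF //; exact: Zr_pos.
by field.
Qed.

Lemma z1_pos {R : realType} : 0 < z1 :> R.
Proof. by rewrite /z1 divr_gt0 // ltr0n. Qed.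

Lemma z2_pos {R : realType} : 0 < z2 :> R.
Proof. rewrite /z2 divr_gt0 //. exact: Zr_pos. exact: Zr_pos. Qed.

Lemma z1_Sm {R : realType} : Sm (z1 : R).
Proof.
have z0 : 0 <= z1 :> R by apply: ltW; exact: z1_pos.
have b0 : av 0 (z1 : R) * Zr Dz <= Zr 674180000000 by rewrite av0 z1E.
have b1 : av 1 (z1 : R) * Zr Dz <= Zr 454518672400.
  by rewrite av1; apply: (@up_mul R _ _ 674180000000 674180000000) => //; rewrite z1E.

have b2 := @up_step R 0 z1 674180000000 454518672400 513014622119 z0 b0 b1 erefl erefl erefl erefl.
have b3 := @up_step R 1 z1 454518672400 513014622119 496358727476 z0 b1 b2 erefl erefl erefl erefl.
have b4 := @up_step R 2 z1 513014622119 496358727476 501011271354 z0 b2 b3 erefl erefl erefl erefl.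
have b5 := @up_step R 3 z1 496358727476 501011271354 499693611125 z0 b3 b4 erefl erefl erefl erefl.
have b6 := @up_step R 4 z1 501011271354 499693611125 500045836397 z0 b4 b5 erefl erefl erefl erefl.
have b7 := @up_step R 5 z1 499693611125 500045836397 499915548216 z0 b5 b6 erefl erefl erefl erefl.
have b8 := @up_step R 6 z1 500045836397 499915548216 499896243784 z0 b6 b7 erefl erefl erefl erefl.
exists 7; split.
  exact: fin_up_le b7 erefl erefl.
exact: fin_up_lt b8 erefl erefl.
Qed.

Lemma z2_Bg {R : realType} : Bg (z2 : R).
Proof.
have b0 : Zr 674185000000 <= av 0 (z2 : R) * Zr Dz by rewrite av0 z2E.
have b1 : Zr 454525414225 <= av 1 (z2 : R) * Zr Dz.
  by rewrite av1; apply: (@lo_mul R _ _ 674185000000 674185000000) => //; rewrite z2E.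

have b2 := @lo_step R 0 z2 674185000000 454525414225 513027568565 b0 b1 erefl erefl erefl erefl.
have b3 := @lo_step R 1 z2 454525414225 513027568565 496381354218 b1 b2 erefl erefl erefl erefl.
have b4 := @lo_step R 2 z2 513027568565 496381354218 501051768050 b2 b3 erefl erefl erefl erefl.
have b5 := @lo_step R 3 z2 496381354218 501051768050 499765629424 b3 b4 erefl erefl erefl erefl.
have b6 := @lo_step R 4 z2 501051768050 499765629424 500174136587 b4 b5 erefl erefl erefl erefl.
have b7 := @lo_step R 5 z2 499765629424 500174136587 500144009103 b5 b6 erefl erefl erefl erefl.
exists 6; split.
  exact: fin_lo_le b6 erefl erefl.
exact: fin_lo_lt b7 erefl erefl.
Qed.


Lemma Zr_frac_pow {R : realType} (a b : Z) n : Z.ltb 0 a = true -> Z.ltb 0 b = true ->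
  (Zr a / Zr b) ^+ n = Zr (Z.pow a (Z.of_nat n)) / Zr (Z.pow b (Z.of_nat n)) :> R.
Proof.
move=> /Z.ltb_lt a0 /Z.ltb_lt b0.
rewrite !Zr_pow ?exprMn ?exprVn //; apply/Z.leb_le; lia.
Qed.

Lemma z1Zr {R : realType} : z1 = Zr 67418 / Zr 100000 :> R.
Proof. by rewrite /z1 !ZrE. Qed.

Lemma ln2_gt0 {R : realType} : 0 < ln (2 : R).
Proof. by apply: ln_gt0; rewrite ltr1n. Qed.


Lemma up_pow {R : realType} (u : R) (x y : Z) n : 0 <= u -> u * Zr Dz <= Zr x ->
  Z.leb 0 x = true -> Z.leb 0 y = true ->
  Z.leb (Z.pow x (Z.of_nat n.+1)) (Z.mul y (Z.pow Dz (Z.of_nat n))) = true ->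
  u ^+ n.+1 * Zr Dz <= Zr y.
Proof.
move=> u0 hu x0 y0 h.
have D0 := @Dpos R.
have Dn : 0 < Zr Dz ^+ n :> R by exact: exprn_gt0.
rewrite -(ler_pM2r Dn).
have -> : u ^+ n.+1 * Zr Dz * Zr Dz ^+ n = (u * Zr Dz) ^+ n.+1 by rewrite exprMn [Zr Dz ^+ n.+1]exprSr mulrA [RHS]mulrAC.
have Dn0 : Z.leb 0 (Z.pow Dz (Z.of_nat n)) = true by apply/Z.leb_le; apply: Z.pow_nonneg.
rewrite -Zr_pow // -Zr_mul //.
apply: (@le_trans _ _ (Zr x ^+ n.+1)); last by rewrite -Zr_pow //; exact: Zr_le.
have A : 0 <= u * Zr Dz by apply: mulr_ge0 => //; exact: ltW.
by apply: lerXn2r; rewrite ?nnegrE ?Zr_ge0.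
Qed.

Lemma lo_pow {R : realType} (u : R) (x y : Z) n : Zr x <= u * Zr Dz ->
  Z.leb 0 x = true -> Z.leb 0 y = true ->
  Z.leb (Z.mul y (Z.pow Dz (Z.of_nat n))) (Z.pow x (Z.of_nat n.+1)) = true ->
  Zr y <= u ^+ n.+1 * Zr Dz.
Proof.
move=> hu x0 y0 h.
have D0 := @Dpos R.
have Dn : 0 < Zr Dz ^+ n :> R by exact: exprn_gt0.
rewrite -(ler_pM2r Dn).
have -> : u ^+ n.+1 * Zr Dz * Zr Dz ^+ n = (u * Zr Dz) ^+ n.+1 by rewrite exprMn [Zr Dz ^+ n.+1]exprSr mulrA [RHS]mulrAC.
have Dn0 : Z.leb 0 (Z.pow Dz (Z.of_nat n)) = true by apply/Z.leb_le; apply: Z.pow_nonneg.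
rewrite -Zr_pow // -Zr_mul //.
apply: (@le_trans _ _ (Zr x ^+ n.+1)); first by rewrite -Zr_pow //; exact: Zr_le.
have A : 0 <= u * Zr Dz by exact: le_trans (Zr_ge0 _) hu.
by apply: lerXn2r; rewrite ?nnegrE ?Zr_ge0.
Qed.

Lemma e1000 {R : realType} (u : R) : u ^+ 1000 = ((u ^+ 5) ^+ 5 ^+ 5) ^+ 8.
Proof. by rewrite -!exprM. Qed.

Lemma w1_bound {R : realType} : (z1 : R)^-1 ^+ 1000 * Zr Dz <= Zr 1675464614054880637703862504157557435288240301324199152600071933936160418586385428946021765024882079147325485565992774140234136716424717002409046056214381298981723796321855341484785243.
Proof.
have w0 : 0 <= (z1 : R)^-1 by rewrite invr_ge0; apply: ltW; exact: z1_pos.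
have b0 : (z1 : R)^-1 * Zr Dz <= Zr 1483283396126.
  have p1 : 0 < Zr 67418 :> R by exact: Zr_pos.
  rewrite z1Zr invf_div mulrAC ler_pdivrMr // -!Zr_mul //; exact: Zr_le.
have b1 := @up_pow R _ _ 7179937706529 4 w0 b0 erefl erefl erefl.
have b2 := @up_pow R _ _ 19081098853720992 4 (exprn_ge0 _ w0) b1 erefl erefl erefl.
have b3 := @up_pow R _ _ 2529396466307807266769325378520622 4 (exprn_ge0 _ (exprn_ge0 _ w0)) b2 erefl erefl erefl.
have b4 := @up_pow R _ _ 1675464614054880637703862504157557435288240301324199152600071933936160418586385428946021765024882079147325485565992774140234136716424717002409046056214381298981723796321855341484785243 7 (exprn_ge0 _ (exprn_ge0 _ (exprn_ge0 _ w0))) b3 erefl erefl erefl.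
by rewrite e1000.
Qed.

Lemma w2_bound {R : realType} : Zr 1663084679357086696054275792861471592985518518828054110144885929599730647081422886964763079727846346825583523621768092612376121133108660126757922943556762726866733934026521761621463017 <= (z2 : R)^-1 ^+ 1000 * Zr Dz.
Proof.
have b0 : Zr 1483272395559 <= (z2 : R)^-1 * Zr Dz.
  have p1 : 0 < Zr 674185 :> R by exact: Zr_pos.
  rewrite /z2 invf_div mulrAC ler_pdivlMr // -!Zr_mul //; exact: Zr_le.
have b1 := @lo_pow R _ _ 7179671465382 4 b0 erefl erefl erefl.
have b2 := @lo_pow R _ _ 19077561360007297 4 b1 erefl erefl erefl.
have b3 := @lo_pow R _ _ 2527052679113032533400340993177168 4 b2 erefl erefl erefl.
have b4 := @lo_pow R _ _ 1663084679357086696054275792861471592985518518828054110144885929599730647081422886964763079727846346825583523621768092612376121133108660126757922943556762726866733934026521761621463017 7 b3 erefl erefl erefl.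
by rewrite e1000.
Qed.

Lemma log_lo {R : realType} (g : R) : 0 < g -> g <= z2 ->
  568%:R / 1000%:R <= log2 (g^-1).
Proof.
move=> g0 gz.
have z0 := @z2_pos R.
have w0 : 0 < (z2 : R)^-1 by rewrite invr_gt0.
have L2 := @ln2_gt0 R.
rewrite /log2 ler_pdivlMr // mulrAC ler_pdivrMr ?ltr0n //.
apply: (@le_trans _ _ (ln ((z2 : R)^-1) * 1000%:R)); last first.
  rewrite ler_pM2r ?ltr0n // ler_ln ?posrE ?invr_gt0 //.
  by rewrite lef_pV2 ?posrE.
rewrite mulrC.
have -> : ln 2 * 568%:R = ln (2 ^+ 568 : R) by rewrite lnXn ?mulr_natr.
have -> : ln ((z2 : R)^-1) * 1000%:R = ln ((z2 : R)^-1 ^+ 1000) by rewrite lnXn ?mulr_natr.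
rewrite ler_ln ?posrE ?exprn_gt0 ?ltr0n //.
have D0 := @Dpos R.
rewrite -(ler_pM2r D0); apply: le_trans w2_bound.
have -> : 2 ^+ 568 = Zr (Z.pow 2 (Z.of_nat 568)) :> R by rewrite Zr_pow // Zr2.
by rewrite -Zr_mul //; apply: Zr_le.
Qed.

Lemma log_hi {R : realType} (g : R) : z1 <= g ->
  log2 (g^-1) < 569%:R / 1000%:R.
Proof.
move=> zg.
have z0 := @z1_pos R.
have g0 : 0 < g by apply: lt_le_trans zg.
have w0 : 0 < (z1 : R)^-1 by rewrite invr_gt0.
have L2 := @ln2_gt0 R.
rewrite /log2 ltr_pdivrMr // mulrAC ltr_pdivlMr ?ltr0n //.
apply: (@le_lt_trans _ _ (ln ((z1 : R)^-1) * 1000%:R)).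
  rewrite ler_pM2r ?ltr0n // ler_ln ?posrE ?invr_gt0 //.
  by rewrite lef_pV2 ?posrE.
rewrite [X in _ < X]mulrC.
have -> : ln 2 * 569%:R = ln (2 ^+ 569 : R) by rewrite lnXn ?mulr_natr.
have -> : ln ((z1 : R)^-1) * 1000%:R = ln ((z1 : R)^-1 ^+ 1000) by rewrite lnXn ?mulr_natr.
rewrite ltr_ln ?posrE ?exprn_gt0 ?ltr0n //.
have D0 := @Dpos R.
rewrite -(ltr_pM2r D0); apply: le_lt_trans w1_bound _.
have -> : 2 ^+ 569 = Zr (Z.pow 2 (Z.of_nat 569)) :> R by rewrite Zr_pow // Zr2.
by rewrite -Zr_mul //; apply: Zr_lt.
Qed.


Definition nnp (p : {poly int}) := forall i, 0 <= p`_i.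

Lemma nnp_add p q : nnp p -> nnp q -> nnp (p + q).
Proof. by move=> hp hq i; rewrite coefD addr_ge0. Qed.

Lemma nnp_mul p q : nnp p -> nnp q -> nnp (p * q).
Proof.
move=> hp hq i; rewrite coefM; apply: sumr_ge0 => j _; exact: mulr_ge0.
Qed.

Lemma coefM_ge p q n j : nnp p -> nnp q -> (j <= n)%N ->
  p`_j * q`_(n - j) <= (p * q)`_n.
Proof.
move=> hp hq jn; rewrite coefM.
have jn' : (j < n.+1)%N by [].
rewrite (bigD1 (Ordinal jn')) //= lerDl.
by apply: sumr_ge0 => k _; exact: mulr_ge0.
Qed.

Lemma L_nnp h : nnp (L h) /\ nnp (L h.+1).
Proof.
elim: h => [|h [IH1 IH2]].
  rewrite L0 L1; split => i; first by rewrite coefX; case: (i == 1)%N.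
  by rewrite coefXn; case: (i == 2)%N.
split => //; rewrite LSS; apply: nnp_mul => //; exact: nnp_add.
Qed.

Lemma L_nn h i : 0 <= (L h)`_i.
Proof. by case: (L_nnp h) => H _; exact: H. Qed.

Lemma L_pos h : (forall n, (2 ^ h < 2 * n <= 2 ^ h.+1)%N -> 0 < (L h)`_n) /\
  (forall n, (2 ^ h.+1 < 2 * n <= 2 ^ h.+2)%N -> 0 < (L h.+1)`_n).
Proof.
elim: h => [|h [IH1 IH2]].
  split => n Hn.
    have -> : n = 1%N by move: Hn; rewrite !expnS expn0; lia.
    by rewrite L0 coefX.
  have -> : n = 2%N by move: Hn; rewrite !expnS expn0; lia.
  by rewrite L1 coefXn.
split => // n Hn.
have nn1 := L_nnp h.+1; have nn0 := L_nnp h.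
have e1 : (2 ^ h.+1 = 2 * 2 ^ h)%N by rewrite expnS.
have e2 : (2 ^ h.+2 = 2 * 2 ^ h.+1)%N by rewrite expnS.
have e3 : (2 ^ h.+3 = 2 * 2 ^ h.+2)%N by rewrite expnS.
have p0 : (0 < 2 ^ h)%N by rewrite expn_gt0.
rewrite LSS mulrDr coefD.
have t1 := nnp_mul _ _ (proj2 nn0) (proj2 nn0) n.
have t2 := nnp_mul _ _ (proj2 nn0) (proj1 nn0) n.
case: (n =P (2 ^ h.+1).+1) => [En|Nn].
  have := coefM_ge (L h.+1) (L h) n (2 ^ h).+1 (proj2 nn0) (proj1 nn0) (_ : ((2 ^ h).+1 <= n)%N).
  have pos1 : 0 < (L h.+1)`_(2 ^ h).+1 by apply: IH2; lia.
  have pos2 : 0 < (L h)`_(n - (2 ^ h).+1) by apply: IH1; lia.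
  have := mulr_gt0 pos1 pos2.
  move=> A B; have := B ltac:(lia); move: A t1 t2; lia.
have := coefM_ge (L h.+1) (L h.+1) n (n %/ 2) (proj2 nn0) (proj2 nn0) (_ : (n %/ 2 <= n)%N).
have pos1 : 0 < (L h.+1)`_(n %/ 2) by apply: IH2; lia.
have pos2 : 0 < (L h.+1)`_(n - n %/ 2) by apply: IH2; lia.
have := mulr_gt0 pos1 pos2.
move=> A B; have := B ltac:(lia); move: A t1 t2; lia.
Qed.

Lemma ell_pos n : (0 < n)%N -> 0 < ell n.
Proof.
move=> n0.
have := @trunc_log_bounds 2 (2 * n - 1) erefl ltac:(lia).
set h := trunc_log 2 (2 * n - 1) => /andP [b1 b2].
have Hh : (2 ^ h < 2 * n <= 2 ^ h.+1)%N by apply/andP; split; lia.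
have hn : (h < n.+1)%N.
  case: h Hh {b1 b2} => [|k] Hk; first by [].
  have := ltn_expl k (erefl : (1 < 2)%N); rewrite expnS in Hk; lia.
rewrite /ell (bigD1 (Ordinal hn)) //=.
have := (proj1 (L_pos h)) n Hh.
set S := \sum_(_ | _) _.
have : 0 <= S by apply: sumr_ge0 => i _; exact: L_nn.
by move=> S0 P0; apply: (lt_le_trans P0); rewrite lerDl.
Qed.

Lemma coef_le_av {R : realType} h n (x : R) : 0 <= x ->
  ((L h)`_n)%:~R * x ^+ n <= av h x.
Proof.
move=> x0; rewrite /av /Lr.
rewrite (@horner_coef_wide _ (maxn (size (map_poly intr (L h) : {poly R})) n.+1)); last exact: leq_maxl.
have hn : (n < maxn (size (map_poly intr (L h) : {poly R})) n.+1)%N by rewrite leq_max ltnSn orbT.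
rewrite (bigD1 (Ordinal hn)) //= coef_map /= lerDl.
apply: sumr_ge0 => i _; rewrite coef_map /=; apply: mulr_ge0; last exact: exprn_ge0.
by rewrite ler0z; exact: L_nn.
Qed.

Lemma ell_le {R : realType} n (x : R) : 0 <= x ->
  (ell n)%:~R * x ^+ n <= \sum_(h < n.+1) av h x.
Proof.
move=> x0; rewrite /ell rmorph_sum /= mulr_suml; apply: ler_sum => i _.
exact: coef_le_av.
Qed.


Lemma psum_mono {R : realType} (z : R) N k : 0 <= z ->
  \sum_(i < N) av i z <= \sum_(i < N + k) av i z.
Proof.
move=> z0; elim: k => [|k IH]; first by rewrite addn0.
rewrite addnS big_ord_recr /=; apply: (le_trans IH); rewrite lerDl; exact: av_nn.
Qed.

Lemma sum_bound {R : realType} (z : R) : 0 <= z -> Sm z ->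
  exists C, forall N, \sum_(i < N) av i z <= C.
Proof.
move=> z0 [h [H0 H1]]; have G := Sm_geo z0 H0 H1.
set c := av h.+1 z in G H1.
have c0 : 0 <= c by exact: av_nn.
have cE : av h.+1 z = c by [].
clearbody c.
set q := c + 2^-1 in G.
have qE : q = c + 2^-1 by []. clearbody q.
have q1 : q < 1 by lra.
have q0 : 0 <= q by lra.
have d0 : 0 < 1 - q by lra.
pose s N := \sum_(i < N) av i z.
have I : forall k, s (h.+1 + k)%N + c * q ^+ k / (1 - q) <= s h.+1 + c / (1 - q).
  elim=> [|k IH]; first by rewrite addn0 expr0 mulr1.
  rewrite /s addnS big_ord_recr /= -/(s _).
  have := (proj2 (G k)); rewrite -addSn => Gk.
  apply: le_trans IH.
  have -> : c * q ^+ k / (1 - q) = c * q ^+ k + c * q ^+ k.+1 / (1 - q).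
    rewrite exprS; field; lra.
  rewrite -addrA lerD2l lerD2r; exact: Gk.
exists (s h.+1 + c / (1 - q)) => N.
apply: (le_trans (psum_mono z N h.+1 z0)); rewrite addnC.
apply: le_trans (I N); rewrite lerDl.
apply: divr_ge0; last lra.
apply: mulr_ge0 => //; exact: exprn_ge0.
Qed.

Lemma z2_lt {R : realType} : (z2 : R) < 67419%:R / 100000%:R.
Proof.
have -> : 67419%:R = Zr 67419 :> R by rewrite ZrE.
have -> : 100000%:R = Zr 100000 :> R by rewrite ZrE.
have p1 : 0 < Zr 1000000 :> R by exact: Zr_pos.
have p2 : 0 < Zr 100000 :> R by exact: Zr_pos.
rewrite /z2 ltr_pdivrMr // mulrAC ltr_pdivlMr // -!Zr_mul //.
by apply: Zr_lt.
Qed.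

Lemma gh_above {R : realType} (gh : nat -> R)
  (Hgh : forall h : nat, 0 < gh h /\ (Lr R h).[gh h] = 2^-1) (e : R) :
  0 < e -> Sm e -> exists K, forall k, (K <= k)%N -> e < gh k.
Proof.
move=> e0 Se; case: (Sm_event (ltW e0) Se) => K HK; exists K => k Hk.
case: (Hgh k) => g0 gE.
rewrite ltNge; apply/negP => ge.
have := av_le k (ltW g0) ge; rewrite /av gE; have := HK k Hk; rewrite /av; lra.
Qed.

Lemma gh_below {R : realType} (gh : nat -> R)
  (Hgh : forall h : nat, 0 < gh h /\ (Lr R h).[gh h] = 2^-1) (y : R) :
  0 <= y -> Bg y -> exists K, forall k, (K <= k)%N -> gh k < y.
Proof.
move=> y0 By; case: (Bg_event y0 By) => K HK; exists K => k Hk.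
case: (Hgh k) => g0 gE.
rewrite ltNge; apply/negP => ge.
have := av_le k y0 ge; rewrite /av gE; have := HK k Hk; rewrite /av; lra.
Qed.

Theorem theorem3 (R : realType) (gh : nat -> R)
  (Hgh : forall h : nat, 0 < gh h /\ (Lr R h).[gh h] = 2^-1) :
  exists gamma : R,
    gh n @[n --> \oo] --> gamma /\
    (67418%:R / 100000%:R <= gamma < 67419%:R / 100000%:R) /\
    (568%:R / 1000%:R <= log2 (gamma^-1) < 569%:R / 1000%:R) /\
    exists theta : nat -> R,
      (forall n : nat, (0 < n)%N ->
         0 < theta n /\
         log2 ((ell n)%:~R) = n%:R * log2 (gamma^-1) + log2 (theta n)) /\
      (forall kappa : R, 1 < kappa ->
         theta n / kappa ^+ n @[n --> \oo] --> (0 : R)).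
Proof.
pose S := [set z : R | 0 < z /\ Sm z].
have z1S : S z1 by split; [exact: z1_pos | exact: z1_Sm].
have ubS : forall z, S z -> z <= z2.
  move=> z [z0 Sz]; rewrite leNgt; apply/negP => zz.
  exact: (Sm_Bg (ltW z2_pos) (ltW zz) z2_Bg Sz).
have hS : has_sup S by split; [exists z1 | exists z2 => z Hz; exact: ubS].
pose g := sup S.
have gz1 : z1 <= g by exact: sup_upper_bound.
have gz2 : g <= z2 by apply: ge_sup; [exists z1 | exact: ubS].
have g0 : 0 < g by apply: lt_le_trans gz1; exact: z1_pos.
have noSm : forall y, g < y -> ~ Sm y.
  move=> y gy Sy; have : S y by split => //; apply: lt_trans gy.
  move/(sup_upper_bound hS); rewrite -/g; lra.
exists g; split.
  apply/cvgrPdist_lt => eps e0.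
  case: (sup_adherent e0 hS) => e Se He.
  case: (gh_above gh Hgh e (proj1 Se) (proj2 Se)) => K1 HK1.
  have hy : exists2 y, Bg y & (0 <= y /\ y < g + eps).
    case: (pselect (Bg (g + eps / 3))) => B1.
      by exists (g + eps / 3) => //; split; lra.
    case: (pselect (Bg (g + eps * 2 / 3))) => B2.
      by exists (g + eps * 2 / 3) => //; split; lra.
    exfalso; apply: (@dich R (g + eps / 3) (g + eps * 2 / 3)) => //.
    - lra.
    - lra.
    - apply: noSm; lra.
    - apply: noSm; lra.
  case: hy => y By Hy.
  case: (gh_below gh Hgh y (_ : 0 <= y) By) => [|K2 HK2]; first by case: Hy => Hy1 _; exact: Hy1.
  exists (maxn K1 K2) => // n /= Hn.
  have := HK1 n (leq_trans (leq_maxl _ _) Hn); have := HK2 n (leq_trans (leq_maxr _ _) Hn).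
  case: Hy => _ Hy.
  rewrite ltr_distlC -/g; move: He; rewrite -/g => He A B; apply/andP; split; lra.
split.
  by apply/andP; split => //; apply: le_lt_trans gz2 z2_lt.
split.
  by apply/andP; split; [exact: log_lo | exact: log_hi].
exists (fun n => (ell n)%:~R * g ^+ n); split.
  move=> n n0; have E0 : 0 < (ell n)%:~R :> R by rewrite ltr0z; exact: ell_pos.
  have G0 : 0 < g ^+ n by exact: exprn_gt0.
  split; first exact: mulr_gt0.
  rewrite /log2 lnM ?posrE // lnXn // lnV ?posrE //.
  rewrite -[ln g *+ n]mulr_natr; ring.
move=> kappa k1.
have kp : 0 < kappa by apply: lt_trans k1.
have eps0 : 0 < g - g / kappa.
  rewrite subr_gt0 ltr_pdivrMr // -[X in X < _]mulr1 ltr_pM2l //.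
case: (sup_adherent eps0 hS) => e [e0 Se] He.
have gek : g < e * kappa.
  move: He; rewrite -/g opprB addrCA subrr addr0 ltr_pdivrMr //.
case: (sum_bound e (ltW e0) Se) => C HC.
have C0 : 0 <= C by have := HC 0%N; rewrite big_ord0.
pose q := g / (e * kappa).
have ek0 : 0 < e * kappa by exact: mulr_gt0.
have q0 : 0 <= q by apply: divr_ge0; [exact: ltW | exact: ltW].
have q1 : q < 1 by rewrite /q ltr_pdivrMr // mul1r.
have hq : `|q| < 1 by rewrite ger0_norm.
apply/cvgrPdist_lt => eps ep.
have epC : 0 < eps / (C + 1) by apply: divr_gt0 => //; lra.
have := cvg_expr hq; move/cvgrPdist_lt => /(_ (eps / (C + 1)) epC) H.
apply: filterS H => n /= Hn.
move: Hn; rewrite !sub0r !normrN.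
have qn0 : 0 <= q ^+ n by exact: exprn_ge0.
rewrite (ger0_norm qn0).
have El : 0 <= (ell n)%:~R :> R.
  by rewrite ler0z /ell; apply: sumr_ge0 => i _; exact: L_nn.
have A0 : 0 <= (ell n)%:~R * e ^+ n by apply: mulr_ge0 => //; apply: exprn_ge0; exact: ltW.
have AC : (ell n)%:~R * e ^+ n <= C by apply: (le_trans (ell_le n e (ltW e0))); exact: HC.
have -> : (ell n)%:~R * g ^+ n / kappa ^+ n = ((ell n)%:~R * e ^+ n) * q ^+ n.
  have en : e ^+ n != 0 by apply: expf_neq0; rewrite gt_eqF.
  have kn : kappa ^+ n != 0 by apply: expf_neq0; rewrite gt_eqF.
  by rewrite /q expr_div_n exprMn; field; rewrite kn en.
have P0 : 0 <= (ell n)%:~R * e ^+ n * q ^+ n by exact: mulr_ge0.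
rewrite (ger0_norm P0) ltr_pdivlMr; last lra.
move: A0 AC qn0; move: ((ell n)%:~R * e ^+ n) (q ^+ n) => A p; nra.
Qed.
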